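(* If $m$ is even and $\mathcal{H}\in\operatorname{H}^m(\mathbb{C}^n)$ is generic, then $\operatorname{rank}(\mathcal{H})=\operatorname{rank}_S(\mathcal{H})=\underline{\operatorname{rank}}(\mathcal{H})=\underline{\operatorname{rank}}_S(\mathcal{H})=\operatorname{rank}_V(\mathcal{H})=1+\frac{(n-1)m}{2}.$
   Context: A tensor $\mathcal{H}\in\operatorname{T}^m(\mathbb{C}^n)$ is Hankel if there is a vector $h=(h_0,\dots,h_{(n-1)m})$ with $\mathcal{H}_{i_1\dots i_m}=h_{i_1+\cdots+i_m-m}$; $\operatorname{H}^m(\mathbb{C}^n)\cong\mathbb{C}^{(n-1)m+1}$ is the space of such tensors, and ''generic'' means outside a proper Zariski-closed subset. Ranks: cp rank $\operatorname{rank}(\mathcal{A})$ = least $r$ with $\mathcal{A}=\sum_{i=1}^r u_{i,1}\otimes\cdots\otimes u_{i,m}$; border rank $\underline{\operatorname{rank}}(\mathcal{A})$ = least $r$ such that $\mathcal{A}$ is a limit of such sums of $r$ terms; symmetric rank $\operatorname{rank}_S$ and symmetric border rank $\underline{\operatorname{rank}}_S$ are defined the same way with terms $u_i^{\otimes m}$; Vandermonde rank $\operatorname{rank}_V(\mathcal{H})$ = least $r$ with $\mathcal{H}=\sum_{i=1}^r(a_i^{n-1},a_i^{n-2}b_i,\dots,b_i^{n-1})^{\otimes m}$, $a_i,b_i\in\mathbb{C}$. *)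

(* Defs.v *)
(* The field of scalars is an arbitrary numClosedFieldType
   (algebraically closed field with a norm / order, e.g. the complex numbers). *)
From HB Require Import structures.
From mathcomp Require Import all_boot all_order all_algebra.
Set Implicit Arguments. Unset Strict Implicit. Unset Printing Implicit Defensive.
Import Order.TTheory GRing.Theory Num.Theory.
Local Open Scope ring_scope.

(* T^m(C^n): order-m tensors with indices in {0,..,n-1} (0-based). *)
Definition tensor (C : Type) (m n : nat) := {ffun {ffun 'I_m -> 'I_n} -> C}.

Definition cp_sum (C : numClosedFieldType) (m n r : nat)
  (U : 'I_r -> 'I_m -> 'I_n -> C) : tensor C m n :=
  [ffun idx : {ffun 'I_m -> 'I_n} => \sum_(i < r) \prod_(j < m) U i j (idx j)].

Definition sym_sum (C : numClosedFieldType) (m n r : nat)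
  (u : 'I_r -> 'I_n -> C) : tensor C m n :=
  cp_sum (fun i (_ : 'I_m) => u i).

Definition vand_vec (C : numClosedFieldType) (n : nat) (a b : C) : 'I_n -> C :=
  fun k => a ^+ (n.-1 - k) * b ^+ k.

Definition vand_sum (C : numClosedFieldType) (m n r : nat) (a b : 'I_r -> C)
  : tensor C m n := @sym_sum C m n r (fun i => @vand_vec C n (a i) (b i)).

Definition tensor_limit (C : numClosedFieldType) (m n : nat)
  (T : nat -> tensor C m n) (A : tensor C m n) : Prop :=
  forall eps : C, 0 < eps -> exists N : nat, forall k : nat, (N <= k)%N ->
    forall idx, `|T k idx - A idx| < eps.

Definition has_cp (C : numClosedFieldType) (m n : nat) (r : nat) (A : tensor C m n) :=
  exists U : 'I_r -> 'I_m -> 'I_n -> C, A = cp_sum U.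
Definition has_sym (C : numClosedFieldType) (m n : nat) (r : nat) (A : tensor C m n) :=
  exists u : 'I_r -> 'I_n -> C, A = sym_sum m u.
Definition has_border (C : numClosedFieldType) (m n : nat) (r : nat) (A : tensor C m n) :=
  exists U : nat -> 'I_r -> 'I_m -> 'I_n -> C, tensor_limit (fun k => cp_sum (U k)) A.
Definition has_sym_border (C : numClosedFieldType) (m n : nat) (r : nat) (A : tensor C m n) :=
  exists u : nat -> 'I_r -> 'I_n -> C, tensor_limit (fun k => sym_sum m (u k)) A.
Definition has_vand (C : numClosedFieldType) (m n : nat) (r : nat) (A : tensor C m n) :=
  exists a b : 'I_r -> C, A = vand_sum m n a b.

Definition is_least (P : nat -> Prop) (R : nat) : Prop :=
  P R /\ forall r, P r -> (R <= r)%N.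

Definition rank_is (C : numClosedFieldType) m n (A : tensor C m n) R := is_least (fun r => has_cp r A) R.
Definition srank_is (C : numClosedFieldType) m n (A : tensor C m n) R := is_least (fun r => has_sym r A) R.
Definition brank_is (C : numClosedFieldType) m n (A : tensor C m n) R := is_least (fun r => has_border r A) R.
Definition sbrank_is (C : numClosedFieldType) m n (A : tensor C m n) R := is_least (fun r => has_sym_border r A) R.
Definition vrank_is (C : numClosedFieldType) m n (A : tensor C m n) R := is_least (fun r => has_vand r A) R.

Definition hankel (C : numClosedFieldType) (m n : nat)
  (h : 'I_((n.-1 * m).+1) -> C) : tensor C m n :=
  [ffun idx : {ffun 'I_m -> 'I_n} => h (inord (\sum_(j < m) (idx j : nat)))].

(* polynomials in N variables, as finite lists of (coefficient, exponent) *)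
Definition mpoly (C : Type) (N : nat) := seq (C * ('I_N -> nat)).
Definition meval (C : numClosedFieldType) (N : nat) (p : mpoly C N) (x : 'I_N -> C) : C :=
  \sum_(t <- p) t.1 * \prod_(i < N) x i ^+ t.2 i.

(* P holds generically: outside a proper Zariski-closed subset, i.e. outside
   the zero set of some polynomial that does not vanish identically. *)
Definition generic (C : numClosedFieldType) (N : nat) (P : ('I_N -> C) -> Prop) :=
  exists p : mpoly C N, (exists x, meval p x != 0) /\
    forall x, meval p x != 0 -> P x.

(* Main.v *)
Require Import Defs.
From HB Require Import structures.
From mathcomp Require Import all_boot all_order all_algebra.
From mathcomp Require Import ring zify.
From Stdlib Require Import FunctionalExtensionality.
Set Implicit Arguments. Unset Strict Implicit. Unset Printing Implicit Defensive.
Import Order.TTheory GRing.Theory Num.Theory.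
Local Open Scope ring_scope.

Section PF.
Variable C : numClosedFieldType.
Variable N : nat.

Definition pf (f : ('I_N -> C) -> C) := exists p : mpoly C N, forall x, meval p x = f x.

Lemma pf_ext f g : (forall x, f x = g x) -> pf f -> pf g.
Proof. by move=> e [p hp]; exists p => x; rewrite hp e. Qed.

Lemma pf_const c : pf (fun _ => c).
Proof.
exists [:: (c, fun _ => 0%N)] => x; rewrite /meval big_seq1 /=.
by rewrite big1 ?mulr1 // => i _; rewrite expr0.
Qed.

Lemma pf_var i : pf (fun x => x i).
Proof.
exists [:: (1, fun j => nat_of_bool (j == i))] => x; rewrite /meval big_seq1 /= mul1r.
rewrite (bigD1 i) //= eqxx expr1 big1 ?mulr1 // => j /negbTE ->; by rewrite expr0.
Qed.

Lemma pf_add f g : pf f -> pf g -> pf (fun x => f x + g x).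
Proof.
by move=> [p hp] [q hq]; exists (p ++ q) => x; rewrite /meval big_cat /= -!/(meval _ _) hp hq.
Qed.

Lemma pf_mul f g : pf f -> pf g -> pf (fun x => f x * g x).
Proof.
move=> [p hp] [q hq].
exists [seq (t1.1 * t2.1, fun i => (t1.2 i + t2.2 i)%N) | t1 <- p, t2 <- q] => x.
rewrite -hp -hq /meval big_allpairs_dep mulr_suml; apply: eq_bigr => t1 _.
rewrite mulr_sumr; apply: eq_bigr => t2 _ /=.
rewrite (eq_bigr (fun i => x i ^+ t1.2 i * x i ^+ t2.2 i)); last by move=> i _; rewrite exprD.
by rewrite big_split /=; rewrite -!mulrA; congr (_ * _); rewrite mulrCA.
Qed.

Lemma pf_sum (I : Type) (r : seq I) (P : pred I) (F : I -> ('I_N -> C) -> C) :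
  (forall i, pf (F i)) -> pf (fun x => \sum_(i <- r | P i) F i x).
Proof.
move=> hF; elim: r => [|i r IH].
  by apply: pf_ext (pf_const 0) => x; rewrite big_nil.
case hP: (P i).
  by apply: pf_ext (pf_add (hF i) IH) => x; rewrite big_cons hP.
by apply: pf_ext IH => x; rewrite big_cons hP.
Qed.

Lemma pf_prod (I : Type) (r : seq I) (P : pred I) (F : I -> ('I_N -> C) -> C) :
  (forall i, pf (F i)) -> pf (fun x => \prod_(i <- r | P i) F i x).
Proof.
move=> hF; elim: r => [|i r IH].
  by apply: pf_ext (pf_const 1) => x; rewrite big_nil.
case hP: (P i).
  by apply: pf_ext (pf_mul (hF i) IH) => x; rewrite big_cons hP.
by apply: pf_ext IH => x; rewrite big_cons hP.
Qed.

Lemma pf_det n (A : ('I_N -> C) -> 'M[C]_n) :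
  (forall i j, pf (fun x => A x i j)) -> pf (fun x => \det (A x)).
Proof.
move=> hA; rewrite /determinant.
apply: pf_sum => s; apply: pf_mul; first exact: pf_const.
by apply: pf_prod => i; apply: hA.
Qed.

End PF.

Section CV.
Variable C : numFieldType.

Definition cv (u : nat -> C) (a : C) := forall eps : C, 0 < eps -> exists N : nat,
  forall k, (N <= k)%N -> `|u k - a| < eps.

Lemma cv_ext u v a : (forall k, u k = v k) -> cv u a -> cv v a.
Proof. by move=> e h eps /h [N hN]; exists N => k /hN; rewrite e. Qed.

Lemma cv_const c : cv (fun _ => c) c.
Proof. by move=> eps he; exists 0%N => k _; rewrite subrr normr0. Qed.

Lemma cv0 u a : cv u a -> cv (fun k => u k - a) 0.
Proof. by move=> h eps /h [N hN]; exists N => k /hN; rewrite subr0. Qed.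

Lemma cv0' u a : cv (fun k => u k - a) 0 -> cv u a.
Proof. by move=> h eps /h [N hN]; exists N => k /hN; rewrite subr0. Qed.

Lemma cv_add u v a b : cv u a -> cv v b -> cv (fun k => u k + v k) (a + b).
Proof.
move=> hu hv eps he.
have he2 : 0 < eps / 2 by rewrite divr_gt0.
case: (hu _ he2) => N1 h1; case: (hv _ he2) => N2 h2.
exists (maxn N1 N2) => k; rewrite geq_max => /andP[k1 k2].
rewrite (splitr eps); apply: le_lt_trans (ltrD (h1 _ k1) (h2 _ k2)).
by rewrite opprD addrACA ler_normD.
Qed.

Lemma cv_mul00 u v : cv u 0 -> cv v 0 -> cv (fun k => u k * v k) 0.
Proof.
move=> hu hv eps he.
case: (hu 1 ltr01) => N1 h1; case: (hv _ he) => N2 h2.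
exists (maxn N1 N2) => k; rewrite geq_max => /andP[k1 k2].
move: (h1 _ k1) (h2 _ k2); rewrite !subr0 normrM => a1 a2.
apply: le_lt_trans a2; rewrite -[X in _ <= X]mul1r ler_wpM2r //; exact: ltW.
Qed.

Lemma cv_scale0 c u : cv u 0 -> cv (fun k => c * u k) 0.
Proof.
move=> hu eps he; have [->|c0] := eqVneq c 0.
  by exists 0%N => k _; rewrite mul0r subr0 normr0.
have hc : 0 < `|c| by rewrite normr_gt0.
case: (hu (eps / `|c|)); first by rewrite divr_gt0.
move=> N hN; exists N => k /hN; rewrite !subr0 normrM => h.
by rewrite mulrC -ltr_pdivlMr.
Qed.

Lemma cv_mul u v a b : cv u a -> cv v b -> cv (fun k => u k * v k) (a * b).
Proof.
move=> hu hv; apply: cv0'.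
have e : forall k, (u k - a) * (v k - b) + (a * (v k - b) + b * (u k - a)) = u k * v k - a * b.
  by move=> k; ring.
apply: (@cv_ext (fun k => (u k - a) * (v k - b) + (a * (v k - b) + b * (u k - a)))) => //; rewrite -[0 : C]add0r; apply: cv_add (cv_mul00 (cv0 hu) (cv0 hv)) _.
rewrite -[0 : C]add0r; apply: cv_add; exact: cv_scale0 (cv0 _).
Qed.

Lemma cv_sum (I : Type) (r : seq I) (P : pred I) (F : I -> nat -> C) (a : I -> C) :
  (forall i, cv (F i) (a i)) -> cv (fun k => \sum_(i <- r | P i) F i k) (\sum_(i <- r | P i) a i).
Proof.
move=> hF; elim: r => [|i r IH].
  by apply: cv_ext (cv_const _) => k; rewrite !big_nil.
rewrite big_cons; case hP: (P i).
  by apply: cv_ext (cv_add (hF i) IH) => k; rewrite big_cons hP.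
by apply: cv_ext IH => k; rewrite big_cons hP.
Qed.

Lemma cv_prod (I : Type) (r : seq I) (P : pred I) (F : I -> nat -> C) (a : I -> C) :
  (forall i, cv (F i) (a i)) -> cv (fun k => \prod_(i <- r | P i) F i k) (\prod_(i <- r | P i) a i).
Proof.
move=> hF; elim: r => [|i r IH].
  by apply: cv_ext (cv_const _) => k; rewrite !big_nil.
rewrite big_cons; case hP: (P i).
  by apply: cv_ext (cv_mul (hF i) IH) => k; rewrite big_cons hP.
by apply: cv_ext IH => k; rewrite big_cons hP.
Qed.

Lemma cv_det n (A : nat -> 'M[C]_n) (B : 'M[C]_n) :
  (forall i j, cv (fun k => A k i j) (B i j)) -> cv (fun k => \det (A k)) (\det B).
Proof.
move=> hA; rewrite /determinant; apply: cv_sum => s.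
apply: cv_mul; first exact: cv_const.
by apply: cv_prod => i; apply: hA.
Qed.

Lemma cv_uniq0 a : cv (fun _ => 0) a -> a = 0.
Proof.
move=> h; apply/eqP; apply/negP => /negP a0.
have := h `|a|; rewrite normr_gt0 a0 => /(_ isT) [N /(_ N (leqnn N))].
by rewrite sub0r normrN ltxx.
Qed.

End CV.

Section Prony.
Variable C : numClosedFieldType.
Variable k1 : nat.
Local Notation k := k1.+1.

Definition Cat (h : nat -> C) : 'M[C]_(k.+1) := \matrix_(a, b) h (a + (k - b))%N.
Definition Mp (h : nat -> C) : 'M[C]_k := \matrix_(i, j) h (i + (k - j))%N.
Definition vv (h : nat -> C) : 'cV[C]_k := \col_i h (i + k).+1.
Definition Dd h := \det (Mp h).
Definition ee h : 'cV[C]_k := \adj (Mp h) *m vv h.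
Definition Qc h (i : nat) : C :=
  if i == k then Dd h else if (i < k)%N then - ee h (inord (k1 - i)) 0 else 0.
Definition Qp h : {poly C} := \poly_(i < k.+1) Qc h i.
Definition Sm h : 'M[C]_(k1 + k) := \matrix_(r, c)
  if (r < k1)%N then ('X^r * Qp h)`_c else ('X^(r - k1) * (Qp h)^`())`_c.

Lemma Qp_coef h i : (Qp h)`_i = Qc h i.
Proof.
rewrite coef_poly; case: ltnP => // hi; rewrite /Qc.
by rewrite gtn_eqF // ltnNge (ltnW hi).
Qed.

Lemma Mp_ee h : Mp h *m ee h = Dd h *: vv h.
Proof. by rewrite /ee mulmxA mul_mx_adj mul_scalar_mx. Qed.

Lemma Qp_horner h t :
  (Qp h).[t] = Dd h * t ^+ k - \sum_(j < k) ee h j 0 * t ^+ (k1 - j).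
Proof.
rewrite (@horner_coef_wide _ k.+1); last exact: size_poly.
rewrite big_ord_recr /= Qp_coef /Qc eqxx addrC; congr (_ + _).
rewrite -sumrN (reindex_inj rev_ord_inj); apply: eq_bigr => j _ /=.
rewrite subSS Qp_coef /Qc ltn_eqF ?ltnS ?leq_subr // mulNr; congr (- (_ * _)).
congr (ee h _ 0); apply: val_inj => /=; rewrite inordK; last by rewrite ltnS leq_subr.
by rewrite subKn // -ltnS.
Qed.

Lemma size_deriv_le (p : {poly C}) : (size p^`() <= (size p).-1)%N.
Proof. by rewrite /deriv size_poly. Qed.

Lemma Sm_root h z : (Qp h).[z] = 0 -> (Qp h)^`().[z] = 0 -> \det (Sm h) = 0.
Proof.
move=> Qz Q'z.
pose v : 'cV[C]_(k1 + k) := \col_c z ^+ c.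
have Sv : Sm h *m v = 0.
  apply/matrixP => r j; rewrite !mxE.
  under eq_bigr => c _ do rewrite !mxE.
  have sQ : (size (Qp h) <= k.+1)%N by exact: size_poly.
  case hr: (r < k1)%N => /=.
    rewrite -(@horner_coef_wide _ _ ('X^r * Qp h)) ?hornerM ?hornerXn ?Qz ?mulr0 //.
    apply: leq_trans (size_polyMleq _ _) _; rewrite size_polyXn.
    by move: sQ hr; case: (size (Qp h)) => //= s; lia.
  move/negbT: hr => hr.
  rewrite -(@horner_coef_wide _ _ ('X^(r - k1) * (Qp h)^`())) ?hornerM ?hornerXn ?Q'z ?mulr0 //.
  apply: leq_trans (size_polyMleq _ _) _; rewrite size_polyXn.
  have := size_deriv_le (Qp h); have := ltn_ord r.
  by move: sQ hr; case: (size (Qp h)) => //= s; case: (size _) => //=; lia.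
have : \adj (Sm h) *m (Sm h *m v) = 0 by rewrite Sv mulmx0.
rewrite mulmxA mul_adj_mx mul_scalar_mx => /matrixP /(_ (Ordinal (ltn_addl k1 (ltn0Sn k1))) 0).
by rewrite !mxE expr0 mulr1.
Qed.

Lemma notuniq_perm (T : eqType) (s : seq T) :
  ~~ uniq s -> exists z r, perm_eq s [:: z, z & r].
Proof.
elim: s => [|a s IH] //=; rewrite negb_and negbK; case/orP => [as_|nu].
  by exists a, (rem a s); rewrite perm_cons perm_to_rem.
case: (IH nu) => z [r pr]; exists z, (a :: r).
rewrite -(perm_cons a) in pr; apply: perm_trans pr _.
by rewrite -[a :: _]/([:: a] ++ [:: z; z] ++ r) perm_catCA.
Qed.

Lemma prony h : Dd h != 0 -> \det (Sm h) != 0 -> ee h ord_max 0 != 0 ->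
  exists t u : 'I_k -> C, (forall i, t i != 0) /\
    forall s, (s < k.*2)%N -> h s.+1 = \sum_i u i * t i ^+ s.
Proof.
move=> Dh Sh eh.
have Qk : Qc h k = Dd h by rewrite /Qc eqxx.
have lQ : lead_coef (Qp h) = Dd h by rewrite lead_coef_poly //= Qk.
have sQ : size (Qp h) = k.+1 by rewrite size_poly_eq //= Qk.
case: (closed_field_poly_normal (Qp h)) => rs; rewrite lQ => Qrs.
have srs : size rs = k.
  by move: sQ; rewrite Qrs size_scale // size_prod_XsubC => -[].
have roots : forall z, z \in rs -> (Qp h).[z] = 0.
  move=> z zr; apply/eqP; rewrite Qrs hornerZ mulf_eq0; apply/orP; right.
  by rewrite -rootE root_prod_XsubC.
have urs : uniq rs.
  apply/negPn/negP => /notuniq_perm [z [r pr]].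
  move: Qrs; rewrite (perm_big _ pr) /= !big_cons => Qe.
  move/eqP: Sh; apply; apply: (@Sm_root _ z).
    by rewrite Qe !(hornerZ, hornerM, hornerXsubC, subrr, mul0r, mulr0).
  rewrite Qe derivZ !derivM derivXsubC.
  by rewrite !mul1r hornerZ hornerD hornerM hornerXsubC subrr mul0r add0r hornerM hornerXsubC subrr mul0r mulr0.
pose t (i : 'I_k) := rs`_i.
have ti : forall i : 'I_k, (i < size rs)%N by move=> i; rewrite srs.
have t0 : forall i, t i != 0.
  move=> i; apply/eqP => ti0; have := roots (t i) (mem_nth 0 (ti i)).
  rewrite ti0 horner_coef0 Qp_coef /Qc /= subn0 => /eqP; rewrite oppr_eq0.
  have -> : (inord k1 : 'I_k) = ord_max by apply: val_inj; rewrite /= inordK.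
  exact/negP.
pose V := Vandermonde k (\row_i t i).
have VU : V \in unitmx.
  rewrite unitmxE unitfE det_Vandermonde; apply/prodf_neq0 => i _; apply/prodf_neq0 => j ij.
  by rewrite !mxE subr_eq0 /t nth_uniq // eq_sym neq_ltn ij.
pose g : 'cV[C]_k := \col_(s < k) h s.+1.
pose u := invmx V *m g.
have Vu : V *m u = g by rewrite /u mulKVmx.
exists t, (fun i => u i 0); split => //.
elim/ltn_ind => s IH hs.
case: (ltnP s k) => hsk.
  have := Vu; move/matrixP => /(_ (Ordinal hsk) 0); rewrite !mxE => <-.
  by apply: eq_bigr => i _; rewrite !mxE mulrC.
have hi0 : (s - k < k)%N by move: hs; rewrite -addnn; lia.
have E : \sum_(j < k) h ((s - k) + (k - j))%N * ee h j 0 = Dd h * h (s - k + k).+1.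
  have := Mp_ee h; move/matrixP => /(_ (Ordinal hi0) 0); rewrite !mxE => <-.
  by apply: eq_bigr => j _; rewrite !mxE.
rewrite subnK // in E.
apply: (mulfI Dh); rewrite -E.
have Rt : forall l, Dd h * t l ^+ k = \sum_(j < k) ee h j 0 * t l ^+ (k1 - j).
  move=> l; apply/eqP; rewrite -subr_eq0 -Qp_horner; apply/eqP; apply: roots.
  exact: mem_nth.
transitivity (\sum_(j < k) \sum_(l < k) u l 0 * t l ^+ (s - k + (k1 - j)) * ee h j 0).
  apply: eq_bigr => j _; rewrite -mulr_suml; congr (_ * _).
  have hj := ltn_ord j.
  have -> : (s - k + (k - j) = (s - k + (k1 - j)).+1)%N by lia.
  rewrite IH; [ by [] | by lia | by lia].
rewrite exchange_big mulr_sumr; apply: eq_bigr => l _ /=.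
have -> : s = (s - k + k)%N by rewrite subnK.
rewrite addnK exprD.
have -> : Dd h * (u l 0 * (t l ^+ (s - k) * t l ^+ k)) = u l 0 * t l ^+ (s - k) * (Dd h * t l ^+ k) by ring.
rewrite Rt mulr_sumr; apply: eq_bigr => j _; rewrite exprD; ring.
Qed.

End Prony.

Section Gen.
Variable C : numClosedFieldType.
Variable k1 : nat.
Local Notation k := k1.+1.
Variable N : nat.
Variable H : ('I_N -> C) -> nat -> C.
Hypothesis pfH : forall s, pf (fun x => H x s).

Lemma pf_Cat : pf (fun x => \det (Cat k1 (H x))).
Proof. by apply: pf_det => i j; apply: pf_ext (pfH _) => x; rewrite mxE. Qed.

Lemma pf_Dd : pf (fun x => Dd k1 (H x)).
Proof. by apply: pf_det => i j; apply: pf_ext (pfH _) => x; rewrite mxE. Qed.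

Lemma pf_ee j : pf (fun x => ee k1 (H x) j 0).
Proof.
rewrite /ee; apply: (@pf_ext _ _ (fun x => \sum_l \adj (Mp k1 (H x)) j l * vv k1 (H x) l 0)).
  by move=> x; rewrite mxE.
apply: pf_sum => l; apply: pf_mul; last by apply: pf_ext (pfH _) => x; rewrite mxE.
apply: (@pf_ext _ _ (fun x => (-1) ^+ (l + j) * \det (row' l (col' j (Mp k1 (H x)))))).
  by move=> x; rewrite mxE.
apply: pf_mul; first exact: pf_const.
by apply: pf_det => a b; apply: pf_ext (pfH _) => x; rewrite !mxE.
Qed.

Lemma pf_Qc i : pf (fun x => Qc k1 (H x) i).
Proof.
rewrite /Qc; case: eqP => _; first exact: pf_Dd.
case: (i < k)%N; last exact: pf_const.
apply: (@pf_ext _ _ (fun x => -1 * ee k1 (H x) (inord (k1 - i)) 0)); first by move=> x; rewrite mulN1r.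
by apply: pf_mul; [exact: pf_const | exact: pf_ee].
Qed.

Lemma pf_Sm : pf (fun x => \det (Sm k1 (H x))).
Proof.
apply: pf_det => r c.
rewrite /Sm; case: (ltnP r k1) => hr.
  apply: pf_ext (_ : pf (fun x => if (c < r)%N then 0 else Qc k1 (H x) (c - r))).
    by move=> x; rewrite mxE hr coefXnM Qp_coef.
  by case: (c < r)%N; [exact: pf_const | exact: pf_Qc].
apply: pf_ext (_ : pf (fun x => if (c < r - k1)%N then 0
     else (c - (r - k1)).+1%:R * Qc k1 (H x) (c - (r - k1)).+1)).
  have hr2 : (r < k1)%N = false by rewrite ltnNge hr.
  by move=> x; rewrite mxE hr2 coefXnM coef_deriv Qp_coef mulr_natl.
case: (c < r - k1)%N; [exact: pf_const | apply: pf_mul; [exact: pf_const | exact: pf_Qc]].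
Qed.

Lemma pf_all : pf (fun x => \det (Cat k1 (H x)) * Dd k1 (H x) * \det (Sm k1 (H x)) * ee k1 (H x) ord_max 0).
Proof. by apply: pf_mul; [apply: pf_mul; [apply: pf_mul|]|]; [exact: pf_Cat|exact: pf_Dd|exact: pf_Sm|exact: pf_ee]. Qed.

End Gen.

Section Wit.
Variable C : numClosedFieldType.
Variable k1 : nat.
Local Notation k := k1.+1.

Definition h0 (s : nat) : C := (nat_of_bool (s == k))%:R + (nat_of_bool (s == k.*2))%:R.

Lemma h0_lt s : (s < k)%N -> h0 s = 0.
Proof.
move=> hs; rewrite /h0 (ltn_eqF hs) (_ : (s == k.*2) = false) ?addr0 //.
apply: ltn_eqF; lia.
Qed.

Lemma h0_k : h0 k = 1.
Proof. by rewrite /h0 eqxx (_ : (k == k.*2) = false) ?addr0 //; apply/eqP; lia. Qed.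

Lemma det_Cat0 : \det (Cat k1 h0) = 1.
Proof.
rewrite det_trig; last first.
  by apply/is_trig_mxP => i j ij; rewrite mxE h0_lt //; have := ltn_ord j; lia.
rewrite big1 // => i _; rewrite mxE subnKC ?h0_k //; have := ltn_ord i; lia.
Qed.

Lemma Dd0 : Dd k1 h0 = 1.
Proof.
rewrite /Dd det_trig; last first.
  by apply/is_trig_mxP => i j ij; rewrite mxE h0_lt //; have := ltn_ord j; lia.
rewrite big1 // => i _; rewrite mxE subnKC ?h0_k //; have := ltn_ord i; lia.
Qed.

Lemma ee0 : ee k1 h0 = \col_j (nat_of_bool (j == ord_max))%:R.
Proof.
set c := \col_j _.
have Mc : Mp k1 h0 *m c = vv k1 h0.
  apply/matrixP => i z; rewrite !mxE (bigD1 ord_max) //= big1; last first.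
    by move=> j /negbTE hj; rewrite !mxE hj mulr0.
  rewrite !mxE eqxx mulr1 addr0 subSnn /h0.
  have hi := ltn_ord i.
  have e1 : ((i + 1)%N == k.*2) = false by apply/negbTE/eqP; lia.
  have e2 : ((i + k)%N.+1 == k) = false by apply/negbTE/eqP; lia.
  have e3 : ((i + k)%N.+1 == k.*2) = (i == k1 :> nat) by apply/idP/idP => /eqP e; apply/eqP; lia.
  have e4 : ((i + 1)%N == k) = (i == k1 :> nat) by rewrite addn1 eqSS.
  by rewrite e1 e2 e3 e4 addr0 add0r.
by rewrite /ee -Mc mulmxA mul_adj_mx -/(Dd k1 h0) Dd0 mul1mx.
Qed.

Lemma Qc0 i : Qc k1 h0 i = if i == k then 1 else if i == 0%N then -1 else 0.
Proof.
rewrite /Qc Dd0; case: eqP => // /eqP ik; rewrite ee0 mxE.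
case: ifP => hi.
  case: (eqVneq i 0%N) => [->|i0].
    by rewrite subn0 (_ : inord k1 = ord_max) ?eqxx //; apply: val_inj; rewrite /= inordK.
  have f : (inord (k1 - i) == ord_max :> 'I_k) = false.
    by apply/negbTE; rewrite -val_eqE /= inordK; lia.
  by rewrite f oppr0.
case: (eqVneq i 0%N) => // i0; move/negbT: hi; rewrite i0; lia.
Qed.

Lemma Sm0 : \det (Sm k1 h0) != 0.
Proof.
rewrite -det_tr det_trig; last first.
  apply/is_trig_mxP => i j ij; rewrite !mxE.
  case: ifP => hj; first by rewrite coefXnM ij.
  rewrite coefXnM; case: ifP => // hi; rewrite coef_deriv Qp_coef Qc0.
  have hj' := ltn_ord j; move/negbT: hj => hj; move/negbT: hi => hi.
  have f1 : ((i - (j - k1)).+1 == k) = false by apply/negbTE/eqP; lia.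
  by rewrite f1 /= mul0rn.
apply/prodf_neq0 => i _; rewrite !mxE coefXnM ltnn subnn.
case: ifP => hi; first by rewrite Qp_coef Qc0 /= oppr_eq0 oner_eq0.
rewrite coefXnM ltnNge leq_subr /= coef_deriv Qp_coef Qc0.
have -> : (i - (i - k1) = k1)%N by move/negbT: hi; lia.
by rewrite eqxx pnatr_eq0.
Qed.

End Wit.

Section Tens.
Variable C : numClosedFieldType.
Variables m n k1 : nat.
Hypothesis hm : ~~ odd m.
Hypothesis m0 : (0 < m)%N.
Hypothesis n2 : (2 <= n)%N.
Hypothesis hk1 : ((n.-1 * m) %/ 2 = k1.+1)%N.
Local Notation k := k1.+1.
Local Notation d := (n.-1 * m)%N.
Local Notation p := m./2.

Lemma facts : (p + p = m /\ k.*2 = d /\ k = n.-1 * p)%N.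
Proof. have := even_halfK hm; move: hk1; rewrite -!divn2; lia. Qed.

Definition hn (h : 'I_d.+1 -> C) (s : nat) : C := h (inord s).

Definition sel (a j : nat) : nat := minn n.-1 (a - n.-1 * j).

Lemma sel_lt a j : (sel a j < n)%N.
Proof. rewrite /sel; lia. Qed.

Lemma sum_sel pp a : (a <= n.-1 * pp)%N -> (\sum_(j < pp) sel a j)%N = a.
Proof.
elim: pp a => [|pp IH] a ha; first by rewrite big_ord0; lia.
rewrite big_ord_recl /=.
rewrite (eq_bigr (fun j : 'I_pp => sel (a - n.-1) j)); last first.
  by move=> j _; rewrite /sel /bump /= mulnDr muln1 subnDA.
rewrite IH; last first.
  by rewrite mulnS in ha; move: ha; generalize (n.-1 * pp)%N => q; lia.
rewrite /sel; lia.
Qed.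

Lemma n_pos : (0 < n)%N. Proof. lia. Qed.
Definition toI (x : nat) : 'I_n := insubd (Ordinal n_pos) x.
Lemma toIK x : (x < n)%N -> (toI x : nat) = x.
Proof. by move=> hx; rewrite /toI val_insubd hx. Qed.

Definition fidx (a b : nat) : {ffun 'I_m -> 'I_n} :=
  [ffun j : 'I_m => if (j < p)%N then toI (sel a j) else toI (sel b (j - p))].

Lemma sum_fidx a b : (a <= k)%N -> (b <= k)%N -> (\sum_(j < m) fidx a b j)%N = (a + b)%N.
Proof.
move=> ha hb; case: facts => hp [hkd hkp].
have hn0 : n = n.-1.+1 by lia.
rewrite (eq_bigr (fun j : 'I_m => if (j < p)%N then sel a j else sel b (j - p))); last first.
  by move=> j _; rewrite ffunE; case: ifP => _; rewrite toIK // sel_lt.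
rewrite -(big_mkord xpredT (fun j => if (j < p)%N then sel a j else sel b (j - p))).
rewrite (big_cat_nat _ (n := p)) /=; [|lia|lia].
rewrite [X in (_ + X)%N](big_addn 0 m p) big_mkord.
have -> : (\sum_(0 <= i < m - p) (if (i + p < p)%N then sel a (i + p) else sel b (i + p - p)) = \sum_(0 <= i < m - p) sel b i)%N.
  by apply: eq_bigr => i _; rewrite ltnNge leq_addl /= addnK.
rewrite big_mkord (eq_bigr (fun j : 'I_p => sel a j)); last by move=> j _; rewrite ltn_ord.
rewrite !sum_sel //; lia.
Qed.

Definition Fl (T : tensor C m n) : 'M[C]_(k.+1) := \matrix_(a, b) T (fidx a (k - b)).

Lemma Fl_hankel h : Fl (@hankel C m n h) = Cat k1 (hn h).
Proof.
apply/matrixP => a b; rewrite !mxE ffunE sum_fidx //.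
  by have := ltn_ord a; lia.
by have := ltn_ord b; lia.
Qed.

Lemma Fl_cp r (U : 'I_r -> 'I_m -> 'I_n -> C) :
  Fl (cp_sum U) = (\matrix_(a < k.+1, i < r) \prod_(j < m | (j < p)%N) U i j (toI (sel a j))) *m
                  (\matrix_(i < r, b < k.+1) \prod_(j < m | ~~ (j < p)%N) U i j (toI (sel (k - b) (j - p)))).
Proof.
apply/matrixP => a b; rewrite !mxE ffunE; apply: eq_bigr => i _; rewrite !mxE.
rewrite (bigID (fun j : 'I_m => (j < p)%N)) /=; congr (_ * _); apply: eq_bigr => j hj; rewrite ffunE.
  by rewrite hj.
by rewrite (negbTE hj).
Qed.

Lemma det_Fl_cp r (U : 'I_r -> 'I_m -> 'I_n -> C) : (r < k.+1)%N -> \det (Fl (cp_sum U)) = 0.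
Proof.
move=> hr; rewrite Fl_cp.
set X := \matrix_(a < k.+1, i < r) _.
set Y := \matrix_(i < r, b < k.+1) _.
apply/eqP; apply/negPn/negP => hd.
have e : \rank (X *m Y) = k.+1 by apply: mxrank_unit; rewrite unitmxE unitfE.
have := mxrankM_maxl X Y; rewrite e => h1; have := rank_leq_col X.
lia.
Qed.

Lemma lower_bound h r : \det (Cat k1 (hn h)) != 0 -> has_border r (@hankel C m n h) -> (k.+1 <= r)%N.
Proof.
move=> hd [U hU]; rewrite leqNgt; apply/negP => hr.
move/eqP: hd; apply; rewrite -Fl_hankel.
apply: cv_uniq0; apply: (@cv_ext _ (fun j => \det (Fl (cp_sum (U j))))).
  by move=> j; rewrite det_Fl_cp.
apply: cv_det => a b; rewrite !mxE => eps he.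
case: (hU eps he) => N hN; exists N => j /hN; rewrite mxE; exact.
Qed.

Lemma sum_sub (idx : {ffun 'I_m -> 'I_n}) :
  (\sum_(j < m) (n.-1 - idx j))%N = (d - \sum_(j < m) idx j)%N.
Proof.
have e : (\sum_(j < m) (n.-1 - idx j) + \sum_(j < m) idx j = \sum_(j < m) n.-1)%N.
  rewrite -big_split; apply: eq_bigr => j _ /=; rewrite subnK //.
  by have := ltn_ord (idx j); lia.
rewrite sum_nat_const card_ord in e; move: e; rewrite mulnC.
by generalize (n.-1 * m)%N => q; lia.
Qed.

Lemma sum_le (idx : {ffun 'I_m -> 'I_n}) : (\sum_(j < m) idx j <= d)%N.
Proof.
have e : (\sum_(j < m) idx j <= \sum_(j < m) n.-1)%N.
  by apply: leq_sum => j _; have := ltn_ord (idx j); lia.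
by rewrite sum_nat_const card_ord mulnC in e.
Qed.

Lemma prod_vand x y (idx : {ffun 'I_m -> 'I_n}) :
  \prod_(j < m) @vand_vec C n x y (idx j) = x ^+ (d - \sum_(j < m) idx j) * y ^+ (\sum_(j < m) idx j).
Proof. by rewrite /vand_vec big_split /= !prodrXr sum_sub. Qed.

Lemma upper_bound h (t u : 'I_k -> C) : (forall i, t i != 0) ->
  (forall s, (s < k.*2)%N -> hn h s.+1 = \sum_i u i * t i ^+ s) ->
  has_vand (k.+1) (@hankel C m n h).
Proof.
move=> t0 hs; case: facts => hp [hkd hkp].
have d0 : (0 < d)%N by lia.
pose w i := u i / t i.
pose al i := d.-root (w i).
pose z := hn h 0 - \sum_i w i.
pose ze := d.-root z.
exists (fun i : 'I_k.+1 => if (i < k)%N then al (inord i) else ze).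
exists (fun i : 'I_k.+1 => if (i < k)%N then t (inord i) * al (inord i) else 0).
apply/ffunP => idx; rewrite /vand_sum /sym_sum /cp_sum !ffunE.
rewrite (eq_bigr _ (fun i _ => prod_vand _ _ idx)).
have := sum_le idx; set s := (\sum_(j < m) idx j)%N => hsd.
rewrite big_ord_recr /= ltnn.
have ew : forall i : 'I_k, al i ^+ d = w i by move=> i; rewrite rootCK.
have ez : ze ^+ d = z by rewrite rootCK.
under eq_bigr => i _ do rewrite ltn_ord inord_val exprMn mulrCA -exprD subnK // ew.
case: s hsd => [|s] hsd.
  rewrite subn0 ez expr0 mulr1 (eq_bigr w); last by move=> i _; rewrite expr0 mul1r.
  by rewrite /z /hn addrC subrK.
rewrite expr0n /= mulr0 addr0.
have := hs s; rewrite /hn => ->; last by lia.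
apply: eq_bigr => i _; rewrite /w exprS.
by field; apply: t0.
Qed.

End Tens.

Section Chain.
Variables (C : numClosedFieldType) (m n : nat).
Implicit Types (A : tensor C m n) (r : nat).

Lemma v_s r A : has_vand r A -> Defs.has_sym r A.
Proof. by move=> [a [b e]]; exists (fun i => vand_vec (a i) (b i)). Qed.
Lemma s_cp r A : Defs.has_sym r A -> has_cp r A.
Proof. by move=> [u e]; exists (fun i _ => u i). Qed.
Lemma cp_b r A : has_cp r A -> has_border r A.
Proof. by move=> [U e]; exists (fun _ => U) => eps he; exists 0%N => j _ idx; rewrite -e subrr normr0. Qed.
Lemma s_sb r A : Defs.has_sym r A -> has_sym_border r A.
Proof. by move=> [u e]; exists (fun _ => u) => eps he; exists 0%N => j _ idx; rewrite -e subrr normr0. Qed.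
Lemma sb_b r A : has_sym_border r A -> has_border r A.
Proof. by move=> [u hu]; exists (fun j i _ => u j i). Qed.
End Chain.

Local Close Scope ring_scope.

Theorem corollary4p3 (C : numClosedFieldType) (m n : nat) :
  ~~ odd m -> (0 < m)%N -> (2 <= n)%N ->
  generic (fun h : 'I_((n.-1 * m).+1) -> C =>
    let H := @hankel C m n h in
    let R := (1 + (n.-1 * m) %/ 2)%N in
    [/\ rank_is H R, srank_is H R, brank_is H R, sbrank_is H R & vrank_is H R]).
Proof.
move=> hm m0 n2.
have [k1 hk1] : exists k1, ((n.-1 * m) %/ 2 = k1.+1)%N.
  exists ((n.-1 * m) %/ 2).-1; have := even_halfK hm; rewrite -!divn2; lia.
case: (@pf_all C k1 _ (fun (x : 'I_((n.-1 * m).+1) -> C) s => x (inord s)) (fun s => pf_var _ _)) => P hP.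
exists P; split.
  exists (fun i => h0 C k1 i); rewrite hP.
  have -> : (fun s => (fun i : 'I_(n.-1 * m).+1 => h0 C k1 i) (inord s)) = h0 C k1.
    apply: functional_extensionality => s /=.
    have := even_halfK hm; rewrite -!divn2 => hd.
    case: (leqP s (n.-1 * m)) => hs; first by rewrite inordK.
    rewrite (_ : inord s = ord0); last by apply: val_inj; rewrite /= /inord /insubd insubN //; lia.
    rewrite /= h0_lt // /h0.
    have e1 : (s == k1.+1) = false by apply/negbTE/eqP; lia.
    have e2 : (s == k1.+1.*2) = false by apply/negbTE/eqP; lia.
    by rewrite e1 e2 addr0.
  rewrite det_Cat0 Dd0 ee0 mxE eqxx !mul1r mulr1; exact: Sm0.
move=> x; rewrite hP => hx.
move: hx; rewrite !mulf_eq0 !negb_or => /andP[/andP[/andP[hC hD] hS] he].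
move=> H R; rewrite {}/H {}/R hk1.
have hv : has_vand (k1.+2) (@hankel C m n x).
  case: (prony hD hS he) => t [u [t0 hu]].
  exact: (@upper_bound C m n k1 hm m0 n2 hk1 x t u t0 hu).
have lb : forall r, has_border r (@hankel C m n x) -> (k1.+2 <= r)%N.
  by move=> r; apply: (@lower_bound C m n k1 hm m0 n2 hk1 x r hC).
split; split.
- exact: s_cp (v_s hv).
- by move=> r /cp_b /lb.
- exact: v_s hv.
- by move=> r /s_cp /cp_b /lb.
- exact: cp_b (s_cp (v_s hv)).
- exact: lb.
- exact: s_sb (v_s hv).
- by move=> r /sb_b /lb.
- exact: hv.
- by move=> r /v_s /s_cp /cp_b /lb.
Qed.
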